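(* Let $g\colon[0,\infty)\to\mathbb{R}$ be strictly monotone with $0<c_1\le g(\lambda)<1/2$ for all $\lambda\ge0$ and $|g(\lambda)-g(\lambda')|\le c_2|\lambda-\lambda'|$ for all $\lambda,\lambda'\ge0$, for some constants $c_1>0$ and $c_2<1/2$. Let $f(\lambda,y)=g(\lambda)+y/2$. Then $f$ satisfies $|f(\lambda,y)-f(\lambda',y')|\le\kappa_1|\lambda-\lambda'|+\kappa_2|y-y'|$ with $\kappa_1=c_2$, $\kappa_2=1/2$, $\kappa_1+\kappa_2<1$, and for the strictly stationary process $((N_t,\lambda_t))_{t\in\mathbb{Z}}$ with $N_t\mid\sigma(\lambda_s,N_s:s\le t-1)\sim\mathrm{Poisson}(\lambda_t)$ and $\lambda_t=f(\lambda_{t-1},N_{t-1})$, one has $2g(\lambda_{t-1})=2\lambda_t-\lfloor2\lambda_t\rfloor$ for all $t$, so $\lambda_{t-1}$ (and hence the whole past $(\lambda_s)_{s\le t}$) is a measurable function of $\lambda_t$; in particular the intensity process $(\lambda_t)_{t\in\mathbb{Z}}$ (and hence also $((N_t,\lambda_t))_{t\in\mathbb{Z}}$) is not strongly mixing.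
   Context: Strong mixing of a stationary process $(X_t)_{t\in\mathbb Z}$ means $\alpha(n)=\sup_{A\in\sigma(X_s:s\le0),B\in\sigma(X_s:s\ge n)}|P(A\cap B)-P(A)P(B)|\to0$. $\lfloor x\rfloor$ denotes the integer part. *)

(* Defs.v *)
From HB Require Import structures.
From mathcomp Require Import all_boot all_order all_algebra.
From mathcomp Require Import all_classical all_reals all_analysis.
Set Implicit Arguments. Unset Strict Implicit. Unset Printing Implicit Defensive.
Import Order.TTheory GRing.Theory Num.Theory.
Local Open Scope classical_set_scope.
Local Open Scope ring_scope.

Definition fpois {R : realType} (g : R -> R) (l y : R) : R := g l + y / 2.

Definition gen_sigma {d d'} {T : measurableType d} {V : measurableType d'}
  (X : int -> T -> V) (S : set int) : set (set T) :=
  <<s [set X s @^-1` B | s in S & B in [set B | measurable B]] >>.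

Definition alpha_mix {d d'} {T : measurableType d} {V : measurableType d'}
  {R : realType} (P : probability T R) (X : int -> T -> V) (n : nat) : \bar R :=
  ereal_sup [set x | exists A B, gen_sigma X [set s | s <= 0]%R A /\
       gen_sigma X [set s | (n%:Z <= s)%R] B /\
       x = `|(P (A `&` B) - P A * P B)%E|%E].

Definition strongly_mixing {d d'} {T : measurableType d} {V : measurableType d'}
  {R : realType} (P : probability T R) (X : int -> T -> V) : Prop :=
  (alpha_mix P X n @[n --> \oo] --> 0%E).

(* strict stationarity: all finite-dimensional distributions (determined on
   rectangles) are shift invariant *)
Definition strictly_stationary {d d'} {T : measurableType d} {V : measurableType d'}
  {R : realType} (P : probability T R) (X : int -> T -> V) : Prop :=
  forall (s : seq (int * set V)) (h : int),
    (forall p, p \in s -> measurable p.2) ->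
    P (\big[setI/setT]_(p <- s) (X (p.1 + h)%R @^-1` p.2)) =
    P (\big[setI/setT]_(p <- s) (X p.1 @^-1` p.2)).

(* Main.v *)
Require Import Defs.
From HB Require Import structures.
From mathcomp Require Import all_boot all_order all_algebra.
From mathcomp Require Import all_classical all_reals all_analysis.
From mathcomp Require Import measurable_realfun.
From mathcomp Require Import lra ring zify.
Import Order.TTheory GRing.Theory Num.Theory.
Local Open Scope classical_set_scope.
Local Open Scope ring_scope.
Lemma gen_in {d d'} {T : measurableType d} {V : measurableType d'}
  (X : int -> T -> V) (S : set int) s B :
  S s -> measurable B -> gen_sigma X S (X s @^-1` B).
Proof. by move=> Ss mB; apply: sub_sigma_algebra; exists s => //; exists B. Qed.

Lemma gen_setT {d d'} {T : measurableType d} {V : measurableType d'}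
  (X : int -> T -> V) (S : set int) : gen_sigma X S setT.
Proof.
have [h0 hC _] := smallest_sigma_algebra setT
  [set X s @^-1` B | s in S & B in [set B | measurable B]].
by have := hC _ h0; rewrite setD0.
Qed.

Lemma notmix {d d'} {T : measurableType d} {V : measurableType d'}
  {R : realType} (P : probability T R) (X : int -> T -> V) (A : set T) (p : R) :
  gen_sigma X [set s | s <= 0] A ->
  (forall n : nat, gen_sigma X [set s | n%:Z <= s] A) ->
  P A = p%:E -> 0 < p < 1 -> ~ strongly_mixing P X.
Proof.
move=> A0 An PA /andP[p0 p1] mix.
have lb : \forall n \near \oo, ((p - p * p)%:E <= alpha_mix P X n)%E.
  near=> n; apply: ereal_sup_ubound; exists A, A; split => //; split => //.
  rewrite setIid PA -EFinM -EFinB /= ger0_norm // subr_ge0.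
  by rewrite ler_piMr // ltW.
have := @lime_ge _ _ eventually_filter _ _ _ (cvgP _ mix) lb.
rewrite (cvg_lim _ mix) //.
rewrite lee_fin subr_le0 -{1}(mulr1 p) ler_pM2l // => h.
by have := lt_le_trans p1 h; rewrite ltxx.
Unshelve. all: end_near.
Qed.
Lemma ginv_meas (R : realType) (g : R -> R) :
  (forall x y, 0 <= x -> 0 <= y -> x < y -> g x < g y) ->
  exists H : R -> R, measurable_fun setT H /\ forall l, 0 <= l -> H (g l) = l.
Proof.
move=> gmono.
pose S u := [set y : R | y = 0 \/ exists x, [/\ 0 <= x, g x <= u & y = 1 - expR (- x)]].
pose G u := sup (S u).
have Sne u : S u !=set0 by exists 0; left.
have Sub u : ubound (S u) 1.
  move=> y [->|[x [_ _ ->]]]; first exact: ler01.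
  by rewrite lerBlDr lerDl expR_ge0.
have hs u : has_sup (S u) by split; [exact: Sne | exists 1; exact: Sub].
have Gmono : {homo G : u v / u <= v}.
  move=> u v uv; apply: ge_sup => // y [->|[x [x0 gx ->]]].
    by apply: sup_upper_bound => //; left.
  by apply: sup_upper_bound => //; right; exists x; split => //; exact: le_trans uv.
have Gg l : 0 <= l -> G (g l) = 1 - expR (- l).
  move=> l0; apply/eqP; rewrite eq_le; apply/andP; split.
    apply: ge_sup => // y [->|[x [x0 gx ->]]].
      by rewrite subr_ge0 expR_le1 oppr_le0.
    rewrite lerD2l lerN2 ler_expR lerN2.
    by rewrite leNgt; apply/negP => /(gmono _ _ l0 x0); rewrite ltNge gx.
  by apply: sup_upper_bound => //; right; exists l; split.
exists (fun u => - ln (1 - G u)); split.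
  apply: measurable_funN; apply: measurableT_comp; first exact: measurable_ln.
  apply: measurable_funB; first exact: measurable_cst.
  exact: nondecreasing_measurable.
by move=> l l0; rewrite Gg // opprB addrC subrK expRK opprK.
Qed.

Lemma fl_meas (R : realType) : measurable_fun setT (fun x : R => (Num.floor x)%:~R : R).
Proof.
apply: nondecreasing_measurable => // x y xy.
by rewrite ler_int; exact: le_floor.
Qed.

Theorem mainTheorem9 (R : realType) (g : R -> R) (c1 c2 : R)
  (hc1 : 0 < c1) (hc2 : c2 < 1 / 2)
  (hmono : (forall x y, 0 <= x -> 0 <= y -> x < y -> g x < g y) \/
           (forall x y, 0 <= x -> 0 <= y -> x < y -> g y < g x))
  (hbnd : forall l, 0 <= l -> c1 <= g l /\ g l < 1 / 2)
  (hlip : forall l l', 0 <= l -> 0 <= l' -> `|g l - g l'| <= c2 * `|l - l'|)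
  (d : measure_display) (T : measurableType d) (P : probability T R)
  (N : int -> T -> nat) (lam : int -> T -> R)
  (hNmeas : forall t, measurable_fun setT (fun w => (N t w)%:R : R))
  (hlmeas : forall t, measurable_fun setT (lam t))
  (hlpos : forall t w, 0 <= lam t w)
  (hstat : strictly_stationary P (fun t w => ((N t w)%:R, lam t w) : R * R))
  (hpois : forall (t : int) (A : set T) (k : nat),
     gen_sigma (fun s w => ((N s w)%:R, lam s w) : R * R) [set s | s <= t - 1] A ->
     P (A `&` [set w | N t w = k]) =
     (\int[P]_(w in A) (poisson_pmf (lam t w) k)%:E)%E)
  (hrec : forall t w, lam t w = fpois g (lam (t - 1) w) (N (t - 1) w)%:R) :
  (forall l l' y y', 0 <= l -> 0 <= l' ->
     `|fpois g l y - fpois g l' y'| <= c2 * `|l - l'| + 1 / 2 * `|y - y'|)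
  /\ c2 + 1 / 2 < 1
  /\ (forall t w, 2 * g (lam (t - 1) w) =
                  2 * lam t w - (Num.floor (2 * lam t w))%:~R)
  /\ (forall t s, s <= t -> exists h : R -> R,
        measurable_fun setT h /\ forall w, lam s w = h (lam t w))
  /\ ~ strongly_mixing P lam
  /\ ~ strongly_mixing P (fun t w => ((N t w)%:R, lam t w) : R * R).
Proof.
have part1 : forall l l' y y', 0 <= l -> 0 <= l' ->
     `|fpois g l y - fpois g l' y'| <= c2 * `|l - l'| + 1 / 2 * `|y - y'|.
  move=> l l' y y' l0 l0'.
  have -> : fpois g l y - fpois g l' y' = (g l - g l') + 1 / 2 * (y - y').
    by rewrite /fpois; field.
  apply: le_trans (ler_normD _ _) _; apply: lerD; first exact: hlip.
  by rewrite normrM ger0_norm.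
have part2 : c2 + 1 / 2 < 1 by lra.
have hfl t w : Num.floor (2 * lam t w) = (N (t - 1) w)%:Z.
  have [g1 g2] := hbnd _ (hlpos (t - 1) w).
  apply: floor_def; rewrite hrec /fpois intrD /=.
  apply/andP; split; lra.
have part3 : forall t w, 2 * g (lam (t - 1) w) =
                  2 * lam t w - (Num.floor (2 * lam t w))%:~R.
  by move=> t w; rewrite hfl (hrec t w) /fpois /=; field.
have [H [Hm HK]] : exists H : R -> R,
    measurable_fun setT H /\ forall l, 0 <= l -> H (g l) = l.
  case: hmono => [inc|dec]; first exact: ginv_meas.
  have inc : forall x y, 0 <= x -> 0 <= y -> x < y -> - g x < - g y.
    by move=> x y x0 y0 xy; rewrite ltrN2; exact: dec.
  have [H0 [H0m H0K]] := @ginv_meas R (fun x => - g x) inc.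
  exists (fun u => H0 (- u)); split; last by move=> l l0; exact: H0K.
  by apply: measurableT_comp => //.
pose phi x := H (x - (Num.floor (2 * x))%:~R / 2).
have phim : measurable_fun setT phi.
  apply: measurableT_comp Hm _; apply: measurable_funB => //.
  apply: measurable_funM => //; apply: measurableT_comp (fl_meas R) _ => //.
have phiK t w : lam (t - 1) w = phi (lam t w).
  rewrite /phi; have -> : lam t w - (Num.floor (2 * lam t w))%:~R / 2 =
    g (lam (t - 1) w) by have := part3 t w; lra.
  by rewrite HK.
have part4 : forall t s, s <= t -> exists h : R -> R,
        measurable_fun setT h /\ forall w, lam s w = h (lam t w).
  have Hk (k : nat) s : exists h : R -> R, measurable_fun setT h /\
      forall w, lam s w = h (lam (s + k%:Z) w).
    elim: k s => [|k IH] s.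
      by exists id; split => // w; rewrite addr0.
    have [h [hm hh]] := IH s.
    exists (h \o phi); split; first exact: measurableT_comp.
    move=> w /=; rewrite hh -phiK; congr (h (lam _ w)); lia.
  move=> t s st; have [h [hm hh]] := Hk `|t - s|%N s.
  exists h; split => // w; rewrite hh; congr (h (lam _ w)); lia.
pose B0 := [set x : R | x < 2^-1].
have mB0 : measurable B0.
  rewrite (_ : B0 = `]-oo, 2^-1[%classic); first exact: measurable_itv.
  by apply/seteqP; split => x; rewrite /B0 /= in_itv.
pose A := lam 0 @^-1` B0.
have lpos w : c1 <= lam (-1) w.
  have [g1 g2] := hbnd _ (hlpos (-1 - 1) w).
  have n0 : 0 <= (N (-1 - 1) w)%:R :> R by [].
  rewrite (hrec (-1) w) /fpois; lra.
have AN : A = [set w | N (-1) w = 0%N].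
  apply/seteqP; split => w; rewrite /A /B0 /= (hrec 0 w) /fpois sub0r;
    have [g1 g2] := hbnd _ (hlpos (-1) w); case: (N (-1) w) => [|n] //=.
    have n1 : 1 <= n.+1%:R :> R by rewrite ler1n.
    by move=> h; exfalso; lra.
  by move=> _; rewrite mul0r addr0; lra.
have PA : exists p, P A = p%:E /\ 0 < p < 1.
  rewrite AN; have := hpois (-1) setT 0%N (gen_setT _ _); rewrite setTI => ->.
  pose f w := expR (- lam (-1) w).
  rewrite (eq_integral (fun w => (f w)%:E)); last first.
    move=> w _; rewrite /poisson_pmf (lt_le_trans hc1 (lpos w)) expr0 mul1r.
    by rewrite fact0 invr1 mul1r.
  have fm : measurable_fun setT f.
    by apply: measurableT_comp; [exact: measurable_expR | exact: measurable_funN].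
  have Ile : (\int[P]_(w in setT) (f w)%:E <= (expR (- c1))%:E)%E.
    apply: (@le_trans _ _ (\int[P]_(w in setT) (cst (expR (- c1))%:E) w)%E).
      apply: ge0_le_integral => //.
      - by move=> w _; rewrite lee_fin expR_ge0.
      - exact/measurable_EFinP.
      - by move=> w _; rewrite lee_fin ler_expR lerN2 lpos.
    rewrite integral_cst //.
    rewrite [X in (_ * X)%E](_ : _ = 1%E) ?mule1 //.
    exact: probability_setT.
  have Igt : (0 < \int[P]_(w in setT) (f w)%:E)%E.
    rewrite lt_neqAle integral_ge0 ?andbT; last by move=> w _; rewrite lee_fin expR_ge0.
    apply/eqP => /esym I0.
    have : (\int[P]_(w in setT) `|(f w)%:E| = 0)%E.
      by rewrite -I0; apply: eq_integral => w _; rewrite gee0_abs // lee_fin expR_ge0.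
    have mfE : measurable_fun setT (fun w => (f w)%:E) by exact/measurable_EFinP.
    move=> H0; have := (ae_eq_integral_abs P measurableT mfE).1 H0.
    case=> M [mM PM0 sub].
    have sub' : setT `<=` M.
      by move=> w _; apply: sub => /(_ I) [] /eqP; rewrite gt_eqF // expR_gt0.
    have := @le_measure _ _ _ P setT M; rewrite !inE => /(_ measurableT mM sub').
    move=> h; have h1 : P setT = 1%E := probability_setT P.
    have h2 : (P setT <= P M)%E := h.
    by move: h2; rewrite h1 PM0 lee_fin ler10.
  move: (\int[P]_(w in setT) (f w)%:E)%E Ile Igt; case => [r| |] //=.
  rewrite lee_fin lte_fin => rle rgt; exists r; split => //; apply/andP; split => //.
  by apply: le_lt_trans rle _; rewrite expR_lt1 oppr_lt0.
have [p [PAp p01]] := PA.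
split; first exact: part1.
split; first exact: part2.
split; first exact: part3.
split; first exact: part4.
split.
  apply: (notmix P lam A p) => //.
    exact: (@gen_in _ _ _ _ lam [set s | s <= 0] 0).
  move=> n; have n0 : 0 <= n%:Z by lia.
  have [h [hm hh]] := part4 n%:Z 0 n0.
  have -> : A = lam n @^-1` (h @^-1` B0).
    by apply/seteqP; split => w; rewrite /A /= hh.
  apply: gen_in => //=.
  by rewrite -[_ @^-1` _]setTI; exact: hm.
have msnd : measurable (snd @^-1` B0 : set (R * R)).
  by rewrite -[_ @^-1` _]setTI; exact: measurable_snd.
apply: (notmix P (fun t w => ((N t w)%:R, lam t w) : R * R) A p) => //.
  exact: (@gen_in _ _ _ _ (fun s w => ((N s w)%:R, lam s w) : R * R)
    [set s | s <= 0] 0 _ _ msnd).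
move=> n; have n0 : 0 <= n%:Z by lia.
  have [h [hm hh]] := part4 n%:Z 0 n0.
have mh : measurable (snd @^-1` (h @^-1` B0) : set (R * R)).
  rewrite -[_ @^-1` _]setTI; apply: measurable_snd => //.
  by rewrite -[_ @^-1` _]setTI; exact: hm.
have -> : A = (fun w => ((N n w)%:R, lam n w) : R * R) @^-1` (snd @^-1` (h @^-1` B0)).
  by apply/seteqP; split => w; rewrite /A /= hh.
apply: (@gen_in _ _ _ _ (fun s w => ((N s w)%:R, lam s w) : R * R)
    [set s | n%:Z <= s] n _ _ mh).
by rewrite /= lexx.
Qed.
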